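(* Let $\Omega$ be a zigzag continual diagram, let $\epsilon>0$, let $f(x)=x+b$ with $b>0$, let $z_+$ be the maximal real number with $f(z_+)=\Omega(z_+-\epsilon)+\epsilon$, and let $\overline{\Omega}=\overline{\Omega}_{\Omega,\epsilon,f}$ be the $\epsilon$-shift of $\Omega$ along $f$. Then for every non-negative function $\phi\colon\mathbb{R}\to\mathbb{R}_+$, \[\int_{-\infty}^{\infty}\phi(z)\,d\mu_{\overline{\Omega}}(z)\ \ge\ \int_{-\infty}^{\infty}\phi(z+\epsilon)\,P^{\min}_{z_+}(z+\epsilon)\,d\mu_\Omega(z).\]
   Context: A continual diagram is a function $\omega\colon\mathbb{R}\to\mathbb{R}_+$ such that $|\omega(z_1)-\omega(z_2)|\le|z_1-z_2|$ for all $z_1,z_2$, and $\omega(z)=|z|$ for all sufficiently large $|z|$. It is a zigzag if it is piecewise affine with slopes only $\pm1$; then, with its local minima at $\mathbbm{x}_0<\dots<\mathbbm{x}_L$ and local maxima at $\mathbbm{y}_1<\dots<\mathbbm{y}_L$, its Cauchy transform is $\mathbf{G}_\omega(z)=\prod_{i=1}^L(z-\mathbbm{y}_i)/\prod_{i=0}^L(z-\mathbbm{x}_i)$, which decomposes as $\sum_i p_i/(z-\mathbbm{x}_i)$ with $p_i>0$, $\sum p_i=1$, and the transition measure is $\mu_\omega=\sum_i p_i\delta_{\mathbbm{x}_i}$. For a general continual diagram, $\log[z\,\mathbf{G}_\omega(z)]=-\int_{-\infty}^\infty\frac{1}{z-w}\big(\frac{\omega(w)-|w|}{2}\big)'\,dw$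 ($z\in\mathbb{C}\setminus\mathbb{R}$) and $\mu_\omega$ is the probability measure with $\mathbf{G}_\omega(z)=\int\frac{d\mu_\omega(x)}{z-x}$ (this agrees with the zigzag definition). $\epsilon$-shift: $\overline{\Omega}_{\Omega,\epsilon,f}(z)=\min\big[\max[\Omega(z-\epsilon)-\epsilon,\ f(z)],\ \Omega(z-\epsilon)+\epsilon\big]$. For real $z_+$ (and the fixed $\epsilon$): $P^{\min}_{z_+}(z)=\frac{z-z_+}{z+\epsilon-z_+}$ for $z\ge z_+$, and $P^{\min}_{z_+}(z)=0$ otherwise. *)

(* Defs.v *)
From mathcomp Require Import all_boot all_order all_algebra.
From mathcomp Require Import reals.
Set Implicit Arguments. Unset Strict Implicit. Unset Printing Implicit Defensive.
Import Order.TTheory GRing.Theory Num.Theory.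
Local Open Scope ring_scope.

Section Defs.
Variable R : realType.

Definition continual_diagram (w : R -> R) : Prop :=
  (forall z, 0 <= w z) /\
  (forall z1 z2, `|w z1 - w z2| <= `|z1 - z2|) /\
  (exists M : R, forall z, M <= `|z| -> w z = `|z|).

Definition zigzag (w : R -> R) : Prop :=
  continual_diagram w /\
  exists s : seq R, forall a b, a < b -> (forall t, t \in s -> ~ (a < t < b)) ->
    (forall z, a <= z <= b -> w z = w a + (z - a)) \/
    (forall z, a <= z <= b -> w z = w a - (z - a)).

Definition is_local_min (w : R -> R) (x : R) : Prop :=
  exists d : R, 0 < d /\ forall z, `|z - x| < d -> w x <= w z.
Definition is_local_max (w : R -> R) (x : R) : Prop :=
  exists d : R, 0 < d /\ forall z, `|z - x| < d -> w z <= w x.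

Definition zigzag_extrema (w : R -> R) (xs ys : seq R) : Prop :=
  sorted <%R xs /\ sorted <%R ys /\
  (forall x, is_local_min w x <-> x \in xs) /\
  (forall y, is_local_max w y <-> y \in ys).

(* p_i: coefficient of 1/(z - x_i) in the partial fraction decomposition of
   G(z) = prod_j (z - y_j) / prod_i (z - x_i), i.e. its residue at x_i *)
Definition zigzag_weight (xs ys : seq R) (i : nat) : R :=
  (\prod_(y <- ys) (xs`_i - y)) /
  (\prod_(j < size xs | j != i :> nat) (xs`_i - xs`_j)).

(* integral of phi against mu_w = sum_i p_i delta_{x_i} *)
Definition transition_integral (xs ys : seq R) (phi : R -> R) : R :=
  \sum_(i < size xs) zigzag_weight xs ys i * phi xs`_i.

Definition eps_shift (Om : R -> R) (eps : R) (f : R -> R) (z : R) : R :=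
  Num.min (Num.max (Om (z - eps) - eps) (f z)) (Om (z - eps) + eps).

Definition Pmin (eps zp : R) (z : R) : R :=
  if zp <= z then (z - zp) / (z + eps - zp) else 0.

End Defs.

(* Main.v *)
Require Import Defs.
From mathcomp Require Import all_boot all_order all_algebra.
From mathcomp Require Import reals.
From mathcomp Require Import exp.
From mathcomp Require Import ring lra zify.
Import Order.TTheory GRing.Theory Num.Theory.
Local Open Scope ring_scope.
Set Implicit Arguments. Unset Strict Implicit. Unset Printing Implicit Defensive.


Ltac nlia :=
  repeat match goal with H : ?T |- _ =>
    lazymatch T with
    | is_true (_ <= _)%N => fail
    | is_true (_ < _)%N => fail
    | is_true (_ == _ :> nat) => fail
    | is_true ((_ <= _)%N && (_ <= _)%N) => fail
    | is_true (_ != _ :> nat) => fail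
    | @eq nat _ _ => fail
    | nat => fail
    | _ => clear H
    end end; lia.

Section PL.
Variable R : realType.
Implicit Types (h : R -> R) (t : nat -> R).

Definition incr t n := forall i, (i < n)%N -> t i < t i.+1.

Lemma incr_le t n i j : incr t n -> (i <= j)%N -> (j <= n)%N -> t i <= t j.
Proof.
move=> H; elim: j => [|j IH]; first by rewrite leqn0 => /eqP ->.
rewrite leq_eqVlt => /orP[/eqP->//| ij] jn.
apply: le_trans (IH ij (ltnW jn)) _; exact/ltW/H.
Qed.

Lemma incr_lt t n i j : incr t n -> (i < j)%N -> (j <= n)%N -> t i < t j.
Proof.
move=> H ij jn; apply: lt_le_trans (H i (leq_trans ij jn)) _.
exact: incr_le H ij jn.
Qed.

Lemma incr_inj t n i j : incr t n -> (i <= n)%N -> (j <= n)%N -> t i = t j -> i = j.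
Proof.
move=> H iN jN E; case: (ltngtP i j) => // ij.
- by have := incr_lt H ij jN; rewrite E ltxx.
- by have := incr_lt H ij iN; rewrite E ltxx.
Qed.

Lemma locate t n x : incr t n -> t 0 <= x -> x < t n ->
  exists i, [/\ (i < n)%N, t i <= x & x < t i.+1].
Proof.
move=> H; elim: n H => [|n IH] H x0 xn; first by move: (le_lt_trans x0 xn); rewrite ltxx.
have [xl|xg] := ltP x (t n).
- have H' : incr t n by move=> i ilt; apply: H; exact: ltnW.
  have [i [? ? ?]] := IH H' x0 xl; exists i; split => //; exact: ltnW.
- by exists n; split.
Qed.

Definition up h t i := h (t i) < h (t i.+1).

Definition PL h t n :=
  [/\ incr t n,
   (forall i, (i < n)%N ->
      (forall z, t i <= z <= t i.+1 -> h z = h (t i) + (z - t i)) \/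
      (forall z, t i <= z <= t i.+1 -> h z = h (t i) - (z - t i))),
   (forall z, z <= t 0 -> h z = h (t 0) - (z - t 0)),
   (forall z, t n <= z -> h z = h (t n) + (z - t n)) &
   [/\ (0 < n)%N, ~~ up h t 0 & up h t n.-1] ].

Definition sl (d : bool) (w : R) := if d then w else - w.

Lemma piece h t n i : PL h t n -> (i < n)%N ->
  forall z, t i <= z <= t i.+1 -> h z = h (t i) + sl (up h t i) (z - t i).
Proof.
case=> H Hp _ _ _ iN; have ti := H i iN.
have [P|P] := Hp i iN => z zi; rewrite /sl /up.
- have E := P (t i.+1); rewrite E; last by rewrite ltW // lexx.
  have -> : h (t i) < h (t i) + (t i.+1 - t i) by lra.
  exact: P.
- have E := P (t i.+1); rewrite E; last by rewrite ltW // lexx.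
  have -> : (h (t i) < h (t i) - (t i.+1 - t i)) = false by apply/negbTE; rewrite -leNgt; lra.
  by rewrite P //; lra.
Qed.

End PL.


Section PL2.
Variable R : realType.
Implicit Types (h : R -> R) (t : nat -> R).

Lemma minr_le1 (a b : R) : Num.min a b <= a. Proof. by rewrite ge_min lexx. Qed.
Lemma minr_le2 (a b : R) : Num.min a b <= b. Proof. by rewrite ge_min lexx orbT. Qed.

Lemma LS h t n x : PL h t n -> exists d : R, 0 < d /\ exists dL dR : bool,
  [/\ (forall z, x - d <= z <= x -> h z = h x - sl dL (x - z)),
      (forall z, x <= z <= x + d -> h z = h x + sl dR (z - x)) &
      ((exists k, [/\ (0 < k < n)%N, x = t k, dL = up h t k.-1 & dR = up h t k]) \/
       ((forall k, (0 < k < n)%N -> x != t k) /\ dL = dR))].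
Proof.
move=> HP; have [H Hp HL HR [n0 u0 un]] := HP.
have tmono i j : (i < j)%N -> (j <= n)%N -> t i < t j by move=> ? ?; exact: incr_lt H _ _.
have [x0|x0] := ltP x (t 0).
  exists (t 0 - x); split; first lra.
  exists false, false; split => //= [z zi|z zi|].
  - rewrite (HL z) ?(HL x); lra.
  - rewrite (HL z) ?(HL x); lra.
  right; split => // k /andP[k0 kn]; apply/eqP => E.
  have := tmono 0%N k k0 (ltnW kn); lra.
have [xn|xn] := ltP (t n) x.
  exists (x - t n); split; first lra.
  exists true, true; split => //= [z zi|z zi|].
  - rewrite (HR z) ?(HR x); lra.
  - rewrite (HR z) ?(HR x); lra.
  right; split => // k /andP[k0 kn]; apply/eqP => E.
  have := tmono k n kn (leqnn n); lra.
have [xe0|xne0] := eqVneq x (t 0).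
  exists (t 1 - t 0); split; first by have := H 0%N n0; lra.
  exists false, false; split => //= [z zi|z zi|].
  - rewrite xe0 (HL z); lra.
  - rewrite xe0 in zi *; rewrite (piece HP n0) ?(negbTE u0) /sl; lra.
  right; split => // k /andP[k0 kn]; apply/eqP => E.
  have := tmono 0%N k k0 (ltnW kn); lra.
have [xen|xnen] := eqVneq x (t n).
  have nS : n = n.-1.+1 by rewrite prednK.
  have n1 : (n.-1 < n)%N by rewrite ltn_predL.
  exists (t n - t n.-1); split; first by have := H n.-1 n1; rewrite -nS; lra.
  exists true, true; split => //= [z zi|z zi|].
  - rewrite xen in zi *.
    have := piece HP n1 (z:=z); have := piece HP n1 (z:=t n); rewrite un /sl -nS.
    move=> E1 E2; rewrite E2 ?E1; try lra; apply/andP; split; lra.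
  - rewrite xen (HR z); lra.
  right; split => // k /andP[k0 kn]; apply/eqP => E.
  have := tmono k n kn (leqnn n); lra.
have xl : x < t n by rewrite lt_neqAle xnen xn.
have [i [iN ti1 ti2]] := locate H x0 xl.
have [xei|xnei] := eqVneq x (t i).
  have i0 : (0 < i)%N by case: i {iN ti1 ti2} xei => // /eqP; rewrite (negbTE xne0).
  have iS : i = i.-1.+1 by rewrite prednK.
  have i1 : (i.-1 < n)%N by rewrite (leq_ltn_trans (leq_pred i)).
  have Hi1 := H _ i1; rewrite -iS in Hi1.
  have m1 := minr_le1 (t i - t i.-1) (t i.+1 - t i).
  have m2 := minr_le2 (t i - t i.-1) (t i.+1 - t i).
  exists (Num.min (t i - t i.-1) (t i.+1 - t i)); split.
    rewrite lt_min; apply/andP; split; lra.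
  exists (up h t i.-1), (up h t i); split => [z zi|z zi|].
  - move/andP: zi => [z1 z2].
    have := piece HP i1 (z:=z); have := piece HP i1 (z:=t i); rewrite -iS.
    move=> E1 E2; rewrite xei E2 ?E1; try (apply/andP; split; lra).
    rewrite /sl; case: (up h t i.-1); lra.
  - move/andP: zi => [z1 z2].
    rewrite xei (piece HP iN); last by apply/andP; split; lra.
    rewrite /sl; case: (up h t i); lra.
  left; exists i; split => //; apply/andP; split => //.
have m1 := minr_le1 (x - t i) (t i.+1 - x).
have m2 := minr_le2 (x - t i) (t i.+1 - x).
have xi : t i < x by rewrite lt_neqAle eq_sym xnei ti1.
exists (Num.min (x - t i) (t i.+1 - x)); split.
  rewrite lt_min; apply/andP; split; lra.
exists (up h t i), (up h t i); split => [z zi|z zi|].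
- move/andP: zi => [z1 z2].
  have := piece HP iN (z:=z); have := piece HP iN (z:=x).
  move=> E1 E2; rewrite E2 ?E1; try (apply/andP; split; lra).
  rewrite /sl; case: (up h t i); lra.
- move/andP: zi => [z1 z2].
  have := piece HP iN (z:=z); have := piece HP iN (z:=x).
  move=> E1 E2; rewrite E2 ?E1; try (apply/andP; split; lra).
  rewrite /sl; case: (up h t i); lra.
right; split => // k /andP[k0 kn]; apply/eqP => E.
have [ki|ik] := leqP k i.
  have := incr_le H ki (ltnW iN); lra.
have := incr_le H ik (ltnW kn); lra.
Qed.

Definition ismin h t n x := exists k, [/\ (0 < k < n)%N, x = t k, ~~ up h t k.-1 & up h t k].
Definition ismax h t n x := exists k, [/\ (0 < k < n)%N, x = t k, up h t k.-1 & ~~ up h t k].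

Lemma PL_ext h t n x : PL h t n ->
  (is_local_min h x <-> ismin h t n x) /\ (is_local_max h x <-> ismax h t n x).
Proof.
move=> HP; have [H _ _ _ _] := HP.
have [d [d0 [dL [dR [HdL HdR Hk]]]]] := LS x HP.
have inj k k' : (0 < k < n)%N -> (0 < k' < n)%N -> t k = t k' -> k = k'.
  move=> /andP[_ /ltnW ?] /andP[_ /ltnW ?]; exact: incr_inj H _ _.
have slopes e : 0 < e -> exists c, [/\ 0 < c, c <= d, `|x + c - x| < e & `|x - c - x| < e].
  move=> e0; exists (Num.min d e / 2).
  have m3 := minr_le1 d e; have m4 := minr_le2 d e.
  have mp : 0 < Num.min d e by rewrite lt_min d0 e0.
  rewrite addrAC subrr add0r addrAC subrr add0r normrN gtr0_norm; last lra.
  split; lra.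
split; split.
- move=> [e [e0 He]]; have [c [c0 cd cR cL]] := slopes e e0.
  have eR := He _ cR; have eL := He _ cL.
  rewrite (HdR (x + c)) in eR; last by apply/andP; split; lra.
  rewrite (HdL (x - c)) in eL; last by apply/andP; split; lra.
  have dRt : dR by apply/idPn => Hn; move: eR; rewrite /sl (negbTE Hn) /=; lra.
  have dLf : ~~ dL by apply/negP => Hn; move: eL; rewrite /sl Hn /=; lra.
  case: Hk => [[k [kn xk EL ER]]|[_ E]]; last by move: dRt dLf; rewrite E => ->.
  by exists k; split => //; rewrite -?EL -?ER.
- move=> [k [kn xk EL ER]]; exists d; split => // z zx.
  case: Hk => [[k' [kn' xk' EL' ER']]|[E _]]; last by move: (E k kn); rewrite xk eqxx.
  have kk : k = k' by apply: inj => //; rewrite -xk -xk'.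
  subst k'; rewrite -EL' in EL; rewrite -ER' in ER.
  have [zl|zg] := leP z x.
  + rewrite (HdL z); last by apply/andP; split => //; move: zx; rewrite ler0_norm ?subr_le0; lra.
    rewrite /sl (negbTE EL) /=; lra.
  + rewrite (HdR z); last by apply/andP; split; [lra|]; move: zx; rewrite gtr0_norm ?subr_gt0; lra.
    rewrite /sl ER /=; lra.
- move=> [e [e0 He]]; have [c [c0 cd cR cL]] := slopes e e0.
  have eR := He _ cR; have eL := He _ cL.
  rewrite (HdR (x + c)) in eR; last by apply/andP; split; lra.
  rewrite (HdL (x - c)) in eL; last by apply/andP; split; lra.
  have dRt : ~~ dR by apply/negP => Hn; move: eR; rewrite /sl Hn /=; lra.
  have dLf : dL by apply/idPn => Hn; move: eL; rewrite /sl (negbTE Hn) /=; lra.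
  case: Hk => [[k [kn xk EL ER]]|[_ E]]; last by move: dRt dLf; rewrite E => /negbTE ->.
  by exists k; split => //; rewrite -?EL -?ER.
- move=> [k [kn xk EL ER]]; exists d; split => // z zx.
  case: Hk => [[k' [kn' xk' EL' ER']]|[E _]]; last by move: (E k kn); rewrite xk eqxx.
  have kk : k = k' by apply: inj => //; rewrite -xk -xk'.
  subst k'; rewrite -EL' in EL; rewrite -ER' in ER.
  have [zl|zg] := leP z x.
  + rewrite (HdL z); last by apply/andP; split => //; move: zx; rewrite ler0_norm ?subr_le0; lra.
    rewrite /sl EL /=; lra.
  + rewrite (HdR z); last by apply/andP; split; [lra|]; move: zx; rewrite gtr0_norm ?subr_gt0; lra.
    rewrite /sl (negbTE ER) /=; lra.
Qed.

End PL2.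


Section Tele.
Variable R : realType.

Definition ismaxb (u : nat -> bool) j := u j.-1 && ~~ u j.
Definition isminb (u : nat -> bool) j := ~~ u j.-1 && u j.

Lemma prod_recr_cond (F : nat -> R) (P : pred nat) m n : (m <= n)%N ->
  \prod_(m <= j < n.+1 | P j) F j = (\prod_(m <= j < n | P j) F j) * (if P n then F n else 1).
Proof. by move=> mn; rewrite big_mkcond big_nat_recr // -big_mkcond. Qed.

Lemma prod_neq0 (F : nat -> R) (P : pred nat) m n :
  (forall j, (m <= j < n)%N -> P j -> F j != 0) -> \prod_(m <= j < n | P j) F j != 0.
Proof.
move=> H; rewrite prodf_seq_neq0; apply/allP => j; rewrite mem_index_iota => jr.
by apply/implyP => Pj; apply: H.
Qed.

Lemma left_tele (a : nat -> R) (u : nat -> bool) m :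
  ~~ u 0%N -> (forall j, (0 < j <= m)%N -> a j != 0) ->
  \prod_(0 <= i < m.+1) (if u i then a i.+1 / a i else 1) =
  (if u m then a m.+1 else 1) * (\prod_(1 <= j < m.+1 | ismaxb u j) a j)
     / (\prod_(1 <= j < m.+1 | isminb u j) a j).
Proof.
move=> u0; elim: m => [|m IH] Ha.
  by rewrite big_nat1 !big_geq // (negbTE u0) !(mul1r, invr1, mulr1).
rewrite big_nat_recr // IH; last by move=> j /andP[j0 jm]; apply: Ha; rewrite j0 ltnW.
rewrite (@prod_recr_cond _ (ismaxb u) 1 m.+1) // (@prod_recr_cond _ (isminb u) 1 m.+1) //.
have B0 : \prod_(1 <= j < m.+1 | isminb u j) a j != 0.
  by apply: prod_neq0 => j /andP[j1 jm] _; apply: Ha; rewrite j1 (ltnW jm).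
have am : a m.+1 != 0 by apply: Ha; rewrite /= leqnn.
move: B0 am.
set A := \prod_(1 <= j < m.+1 | ismaxb u j) a j.
set B := \prod_(1 <= j < m.+1 | isminb u j) a j.
rewrite /ismaxb /isminb /=.
case: (u m); case: (u m.+1) => /= B0 am; field; rewrite ?B0 ?am //.
Qed.


Lemma right_tele (a : nat -> R) (u : nat -> bool) k m : u k -> (k <= m)%N ->
  (forall j, (k < j <= m.+1)%N -> a j != 0) ->
  \prod_(k <= i < m.+1) (if u i then 1 else a i / a i.+1) =
  (\prod_(k.+1 <= j < m.+1 | ismaxb u j) a j) / (\prod_(k.+1 <= j < m.+1 | isminb u j) a j)
     / (if u m then 1 else a m.+1).
Proof.
move=> uk; elim: m => [|m IH] km Ha.
  move: km; rewrite leqn0 => /eqP k0; subst k.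
  by rewrite big_nat1 !big_geq // uk !(mul1r, invr1, mulr1).
move: km; rewrite leq_eqVlt => /orP[/eqP kE|km].
  subst k; by rewrite big_nat1 !big_geq // uk !(mul1r, invr1, mulr1).
rewrite big_nat_recr ?(ltnW km) // IH //; last first.
  by move=> j /andP[j0 jm]; apply: Ha; rewrite j0 /= (leq_trans jm).
rewrite (@prod_recr_cond _ (ismaxb u) k.+1 m.+1) // (@prod_recr_cond _ (isminb u) k.+1 m.+1) //.
have B0 : \prod_(k.+1 <= j < m.+1 | isminb u j) a j != 0.
  by apply: prod_neq0 => j /andP[j1 jm] _; apply: Ha; rewrite j1 (leq_trans (ltnW jm)).
have am : a m.+1 != 0 by apply: Ha; rewrite km /=.
have am2 : a m.+2 != 0 by apply: Ha; rewrite leqnn andbT; exact: ltn_trans km _.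
move: B0 am am2.
set A := \prod_(k.+1 <= j < m.+1 | ismaxb u j) a j.
set B := \prod_(k.+1 <= j < m.+1 | isminb u j) a j.
rewrite /ismaxb /isminb /=.
case: (u m); case: (u m.+1) => /= B0 am am2; field; rewrite ?B0 ?am ?am2 //.
Qed.

Lemma weight_tele (a : nat -> R) (u : nat -> bool) n k :
  ~~ u 0%N -> u n.-1 -> (0 < k < n)%N -> ~~ u k.-1 -> u k ->
  (forall j, (j <= n)%N -> j != k -> a j != 0) ->
  (\prod_(1 <= j < n | ismaxb u j) a j) / (\prod_(1 <= j < n | isminb u j && (j != k)) a j)
  = (\prod_(0 <= i < k) (if u i then a i.+1 / a i else 1)) *
    (\prod_(k <= i < n) (if u i then 1 else a i / a i.+1)).
Proof.
move=> u0 un /andP[k0 kn] uk1 uk Ha.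
case: k k0 kn uk1 uk Ha => // k _ kn uk1 uk Ha.
case: n un kn Ha => // n un kn Ha.
rewrite left_tele //; last first.
  by move=> j /andP[j0 jk]; apply: Ha; nlia.
rewrite right_tele //; last first.
  by move=> j /andP[j0 jk]; apply: Ha; nlia.
rewrite /= in uk1; rewrite (negbTE uk1) un mul1r divr1.
rewrite !(big_cat_nat (n:=k.+1) (m:=1) (p:=n.+1)) //; last by nlia.
rewrite [X in _ * X / _](big_ltn_cond) // [X in _ / (_ * X)](big_ltn_cond) //.
rewrite /ismaxb /isminb uk eqxx /= !andbF.
have E1 : \prod_(1 <= j < k.+1 | ~~ u j.-1 && u j && (j != k.+1)) a j =
          \prod_(1 <= j < k.+1 | isminb u j) a j.
  rewrite big_nat_cond [RHS]big_nat_cond; apply: eq_bigl => j.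
  case: (boolP (1 <= j < k.+1)%N) => //= /andP[_ jk].
  by rewrite (ltn_eqF jk) andbT.
have E2 : \prod_(k.+2 <= j < n.+1 | ~~ u j.-1 && u j && (j != k.+1)) a j =
          \prod_(k.+2 <= j < n.+1 | isminb u j) a j.
  rewrite big_nat_cond [RHS]big_nat_cond; apply: eq_bigl => j.
  case: (boolP (k.+2 <= j < n.+1)%N) => //= /andP[jk _].
  by rewrite eq_sym (ltn_eqF jk) andbT.
rewrite E1 E2.
have B1 : \prod_(1 <= j < k.+1 | isminb u j) a j != 0.
  apply: prod_neq0 => j /andP[j1 jm] _; apply: Ha; first by rewrite (leq_trans (ltnW jm)) // ltnW.
  by rewrite (ltn_eqF jm).
have B2 : \prod_(k.+2 <= j < n.+1 | isminb u j) a j != 0.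
  apply: prod_neq0 => j /andP[j1 jm] _; apply: Ha; first by rewrite ltnW.
  by rewrite eq_sym (ltn_eqF j1).
rewrite /ismaxb /isminb in B1 B2 *.
move: B1 B2.
set A1 := \prod_(1 <= j < k.+1 | _) a j.
set A2 := \prod_(k.+2 <= j < n.+1 | _) a j.
set B1 := \prod_(1 <= j < k.+1 | _) a j.
set B2 := \prod_(k.+2 <= j < n.+1 | _) a j.
move=> B1n B2n; field; rewrite B1n B2n //.
nlia.
Qed.

End Tele.


Section W.
Variable R : realType.
Implicit Types (h : R -> R) (t : nat -> R) (xs ys : seq R).

Definition wgt xs ys (x : R) :=
  (\prod_(y <- ys) (x - y)) / (\prod_(x' <- xs | x' != x) (x - x')).

Lemma zw_wgt xs ys i : uniq xs -> (i < size xs)%N ->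
  zigzag_weight xs ys i = wgt xs ys xs`_i.
Proof.
move=> U iS; rewrite /zigzag_weight /wgt; congr (_ / _).
rewrite (big_nth 0) big_mkord; apply: eq_bigl => j /=.
by rewrite nth_uniq.
Qed.

Lemma ti_wgt xs ys (phi : R -> R) : uniq xs ->
  transition_integral xs ys phi = \sum_(x <- xs) wgt xs ys x * phi x.
Proof.
move=> U; rewrite /transition_integral (big_nth 0) big_mkord.
by apply: eq_bigr => i _; rewrite zw_wgt.
Qed.

Lemma PL_weight h t n xs ys k :
  PL h t n -> uniq xs -> uniq ys ->
  (forall x, x \in xs <-> is_local_min h x) -> (forall y, y \in ys <-> is_local_max h y) ->
  (0 < k < n)%N -> ~~ up h t k.-1 -> up h t k ->
  wgt xs ys (t k) =
    (\prod_(0 <= i < k) (if up h t i then (t k - t i.+1) / (t k - t i) else 1)) *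
    (\prod_(k <= i < n) (if up h t i then 1 else (t k - t i) / (t k - t i.+1))).
Proof.
move=> HP Ux Uy Hx Hy kn uk1 uk.
have [H _ _ _ [n0 u0 un]] := HP.

have tinj i j : (i <= n)%N -> (j <= n)%N -> (t i == t j) = (i == j).
  move=> iN jN; apply/eqP/eqP => [|->//]; exact: incr_inj H iN jN.
have injr : {in index_iota 1 n &, injective t}.
  move=> i j; rewrite !mem_index_iota => /andP[_ /ltnW iN] /andP[_ /ltnW jN] /eqP.
  by rewrite tinj // => /eqP.
have Pmax : perm_eq ys [seq t j | j <- [seq j <- index_iota 1 n | ismaxb (up h t) j]].
  apply: uniq_perm => //.
    rewrite map_inj_in_uniq ?filter_uniq ?iota_uniq //.
    by move=> i j; rewrite !mem_filter => /andP[_ ?] /andP[_ ?]; apply: injr.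
  move=> y; apply/idP/idP.
  - move/Hy/(PL_ext y HP).2 => [j [jn -> uj1 uj]].
    apply/mapP; exists j => //; rewrite mem_filter mem_index_iota /ismaxb uj1 uj.
    by move: jn; rewrite /=.
  - move/mapP => [j]; rewrite mem_filter mem_index_iota => /andP[/andP[uj1 uj] jn] ->.
    by apply/Hy/(PL_ext _ HP).2; exists j; split.
have Pmin : perm_eq xs [seq t j | j <- [seq j <- index_iota 1 n | isminb (up h t) j]].
  apply: uniq_perm => //.
    rewrite map_inj_in_uniq ?filter_uniq ?iota_uniq //.
    by move=> i j; rewrite !mem_filter => /andP[_ ?] /andP[_ ?]; apply: injr.
  move=> y; apply/idP/idP.
  - move/Hx/(PL_ext y HP).1 => [j [jn -> uj1 uj]].
    apply/mapP; exists j => //; rewrite mem_filter mem_index_iota /isminb uj1 uj.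
    by move: jn; rewrite /=.
  - move/mapP => [j]; rewrite mem_filter mem_index_iota => /andP[/andP[uj1 uj] jn] ->.
    by apply/Hx/(PL_ext _ HP).1; exists j; split.
rewrite /wgt (perm_big _ Pmax) (perm_big _ Pmin) !big_map big_filter big_filter_cond.
have E : \prod_(j <- index_iota 1 n | isminb (up h t) j && (t j != t k)) (t k - t j) =
         \prod_(1 <= j < n | isminb (up h t) j && (j != k)) (t k - t j).
  rewrite big_seq_cond [RHS]big_seq_cond; apply: eq_bigl => j.
  case: (boolP (j \in index_iota 1 n)) => //=; rewrite mem_index_iota => /andP[_ jn].
  by rewrite tinj //; nlia.
rewrite E; apply: weight_tele => //.
move=> j jN jk; rewrite subr_eq0 eq_sym tinj //.
by move: kn => /andP[_ /ltnW].
Qed.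

Lemma div_npos (a b : R) : a <= 0 -> b <= 0 -> 0 <= a / b.
Proof.
move=> a0 b0; have -> : a / b = (- a) / (- b) by rewrite invrN mulrNN.
by apply: divr_ge0; rewrite oppr_ge0.
Qed.

Lemma PL_weight_ge0 h t n xs ys x :
  PL h t n -> uniq xs -> uniq ys ->
  (forall x, x \in xs <-> is_local_min h x) -> (forall y, y \in ys <-> is_local_max h y) ->
  x \in xs -> 0 <= wgt xs ys x.
Proof.
move=> HP Ux Uy Hx Hy /Hx /(PL_ext x HP).1 [k [kn -> uk1 uk]].
have [H _ _ _ _] := HP.
move: (kn) => /andP[k0 /ltnW kN].
rewrite (PL_weight HP) //; apply: mulr_ge0.
  rewrite big_seq; apply: prodr_ge0 => i; rewrite mem_index_iota => /andP[_ ik].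
  case: ifP => // _; apply: divr_ge0; rewrite subr_ge0; apply: (incr_le H) => //; nlia.
rewrite big_seq; apply: prodr_ge0 => i; rewrite mem_index_iota => /andP[ki iN].
case: ifP => // _; apply: div_npos; rewrite subr_le0; apply: (incr_le H) => //; nlia.
Qed.

End W.


Section C.
Variable R : realType.

Lemma ln_le_sub1 (y : R) : 0 < y -> ln y <= y - 1.
Proof.
move=> y0; have := expR_ge1Dx (ln y); rewrite lnK ?posrE //; lra.
Qed.

Lemma lnB_le (a b : R) : 0 < a -> 0 < b -> ln a - ln b <= (a - b) / b.
Proof.
move=> a0 b0; rewrite -ln_div ?posrE //.
apply: le_trans (ln_le_sub1 _) _; first exact: divr_gt0.
rewrite mulrBl divff ?gt_eqF //.
Qed.

Lemma ln_prod (r : seq nat) (P : pred nat) (F : nat -> R) :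
  (forall i, P i -> 0 < F i) ->
  0 < \prod_(i <- r | P i) F i /\ ln (\prod_(i <- r | P i) F i) = \sum_(i <- r | P i) ln (F i).
Proof.
move=> H; apply: (big_rec2 (fun a b => 0 < a /\ ln a = b)).
  by rewrite ln1.
move=> i y1 y2 Pi [y0 <-]; split; first by rewrite mulr_gt0 ?H.
by rewrite lnM ?posrE ?H.
Qed.

Lemma abel (c r : nat -> R) m :
  (forall j, (j <= m)%N -> \sum_(j <= i < m) c i <= 0) ->
  (forall i, (i.+1 < m)%N -> r i <= r i.+1) ->
  forall j, (j <= m)%N -> \sum_(j <= i < m) c i * r i <= r j * \sum_(j <= i < m) c i.
Proof.
move=> HD Hr j jm.
have [d Ed] : exists d, (j + d = m)%N by exists (m - j)%N; nlia.
elim: d j jm Ed => [|d IH] j jm Ed.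
  by rewrite addn0 in Ed; subst j; rewrite !big_geq // mulr0.
have jlt : (j < m)%N by nlia.
rewrite (big_ltn (F := fun i => c i * r i)) // (big_ltn (F := c)) //.
have IH' := IH j.+1 jlt ltac:(nlia).
have Dn := HD j.+1 jlt.
have [jm2|jm2] := ltnP j.+1 m.
  have rj := Hr j jm2.
  have : r j.+1 * \sum_(j.+1 <= i < m) c i <= r j * \sum_(j.+1 <= i < m) c i.
    by apply: ler_wnM2r.
  move: IH'; set S := \sum_(j.+1 <= i < m) c i; set T := \sum_(j.+1 <= i < m) c i * r i.
  move=> h1 h2; rewrite mulrDr; lra.
have Ej : j.+1 = m by nlia.
by rewrite Ej !big_geq // !addr0 mulrC.
Qed.

Lemma sum_ind_tele (t : nat -> R) (h : R -> R) (j m : nat) :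
  (j <= m)%N ->
  (forall i, (j <= i < m)%N -> h (t i.+1) = h (t i) + sl (up h t i) (t i.+1 - t i)) ->
  \sum_(j <= i < m) (if up h t i then t i.+1 - t i else 0) = (h (t m) + t m - (h (t j) + t j)) / 2.
Proof.
move=> jm Hp.
rewrite (eq_big_nat _ _ (F2 := fun i => (h (t i.+1) + t i.+1) / 2 - (h (t i) + t i) / 2)).
  by rewrite telescope_sumr // mulrBl.
move=> i ir; rewrite (Hp i ir) /sl; case: (up h t i) => /=; field => //.
Qed.

Lemma sum_tele (t : nat -> R) (j m : nat) : (j <= m)%N ->
  \sum_(j <= i < m) (t i.+1 - t i) = t m - t j.
Proof. by move=> jm; rewrite telescope_sumr. Qed.

Lemma left_compare (t : nat -> R) (hW hB : R -> R) (x eps : R) (m m' : nat) :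
  incr t m -> t m < x -> (m' <= m)%N -> t m' = t m - eps -> 0 < eps ->
  (forall i, (i < m)%N -> hW (t i.+1) = hW (t i) + sl (up hW t i) (t i.+1 - t i)) ->
  (forall i, (i < m)%N -> hB (t i.+1) = hB (t i) + sl (up hB t i) (t i.+1 - t i)) ->
  hB (t m) = hW (t m) + eps -> (forall j, (j <= m)%N -> hW (t j) - eps <= hB (t j)) ->
  (\prod_(0 <= i < m) (if up hW t i then (x - t i.+1) / (x - t i) else 1)) * ((x - t m) / (x - t m + eps))
  <= \prod_(0 <= i < m) (if up hB t i then (x - t i.+1) / (x - t i) else 1).
Proof.
move=> H xm m'm tm' e0 HW HB Em Hj.
have tle i j : (i <= j)%N -> (j <= m)%N -> t i <= t j by move=> ? ?; exact: incr_le H _ _.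
have pos i : (i <= m)%N -> 0 < x - t i by move=> im; have := tle i m im (leqnn m); lra.
have ell i : (i < m)%N -> 0 < t i.+1 - t i by move=> im; have := H i im; lra.
set g := fun i => ln (x - t i) - ln (x - t i.+1).
set l := fun i => t i.+1 - t i.
have lnq i : (i < m)%N -> ln ((x - t i.+1) / (x - t i)) = - g i.
  by move=> im; rewrite ln_div ?posrE ?pos ?(ltnW im) // /g opprB.
have qpos i : (i < m)%N -> 0 < (x - t i.+1) / (x - t i).
  by move=> im; rewrite divr_gt0 // pos // ltnW.
have lnP (h : R -> R) : 0 < \prod_(0 <= i < m) (if up h t i then (x - t i.+1) / (x - t i) else 1) /\
   ln (\prod_(0 <= i < m) (if up h t i then (x - t i.+1) / (x - t i) else 1)) =
   - \sum_(0 <= i < m) (if up h t i then g i else 0).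
  rewrite big_seq_cond.
  have HF : forall i, (i \in index_iota 0 m) && true ->
      0 < (if up h t i then (x - t i.+1) / (x - t i) else 1).
    by move=> i; rewrite mem_index_iota andbT => /andP[_ im]; case: ifP => _ //; apply: qpos.
  have [P1 P2] := @ln_prod (index_iota 0 m) _ _ HF.
  split => //; rewrite P2 -sumrN [RHS]big_seq_cond; apply: eq_bigr => i.
  rewrite mem_index_iota andbT => /andP[_ im]; case: ifP => _; first exact: lnq.
  by rewrite ln1 oppr0.
have [PW lnW] := lnP hW.
have [PB lnB] := lnP hB.
have tm'e : x - t m + eps = x - t m' by rewrite tm'; lra.
rewrite tm'e -ler_ln ?posrE //; last by rewrite mulr_gt0 // divr_gt0 // pos.
rewrite lnM ?posrE ?divr_gt0 ?pos // ln_div ?posrE ?pos // lnW lnB.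
have Sg : \sum_(m' <= i < m) g i = ln (x - t m') - ln (x - t m).
  rewrite (eq_big_nat _ _ (F2 := fun i => - ln (x - t i.+1) - - ln (x - t i))).
    by rewrite telescope_sumr // opprK addrC.
  by move=> i _; rewrite /g; lra.
have Sg' : \sum_(0 <= i < m) (if (m' <= i)%N then g i else 0) = \sum_(m' <= i < m) g i.
  rewrite (big_cat_nat (n := m')) //= big1_seq ?add0r; last first.
    by move=> i; rewrite mem_index_iota => /andP[_ /andP[_ im']]; rewrite leqNgt im'.
  by apply: eq_big_nat => i /andP[mi _]; rewrite mi.
suff key : \sum_(0 <= i < m) (if up hB t i then g i else 0) -
           \sum_(0 <= i < m) (if up hW t i then g i else 0) -
           \sum_(0 <= i < m) (if (m' <= i)%N then g i else 0) <= 0.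
  by rewrite Sg' Sg in key; lra.
set b := fun (c : bool) => if c then (1 : R) else 0.
pose c i := (b (up hB t i) - b (up hW t i) - b (m' <= i)%N) * l i.
pose r i := g i / l i.
have Ecr : \sum_(0 <= i < m) c i * r i =
    \sum_(0 <= i < m) (if up hB t i then g i else 0) -
    \sum_(0 <= i < m) (if up hW t i then g i else 0) -
    \sum_(0 <= i < m) (if (m' <= i)%N then g i else 0).
  rewrite -!sumrB; apply: eq_big_nat => i /andP[_ im].
  have l0 : l i != 0 by rewrite gt_eqF // ell.
  rewrite /c /r /b; case: (up hB t i); case: (up hW t i); case: (m' <= i)%N; field => //.
have Ec j : (j <= m)%N -> \sum_(j <= i < m) c i =
    \sum_(j <= i < m) (if up hB t i then l i else 0) -
    \sum_(j <= i < m) (if up hW t i then l i else 0) -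
    \sum_(j <= i < m) (if (m' <= i)%N then l i else 0).
  move=> jm; rewrite -!sumrB; apply: eq_big_nat => i /andP[_ im].
  by rewrite /c /b; case: (up hB t i); case: (up hW t i); case: (m' <= i)%N; ring.
have HD j : (j <= m)%N -> \sum_(j <= i < m) c i <= 0.
  move=> jm; rewrite Ec //.
  have SV := sum_ind_tele (t := t) (h := hB) jm (fun i ir => HB i (proj2 (andP ir))).
  have SU := sum_ind_tele (t := t) (h := hW) jm (fun i ir => HW i (proj2 (andP ir))).
  have Vle : \sum_(j <= i < m) (if up hB t i then l i else 0) <= t m - t j.
    rewrite -(sum_tele t jm); apply: ler_sum_nat => i /andP[_ im].
    by case: ifP => _ //; apply/ltW/ell.
  have Uge : 0 <= \sum_(j <= i < m) (if up hW t i then l i else 0).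
    rewrite big_seq; apply: sumr_ge0 => i; rewrite mem_index_iota => /andP[_ im].
    by case: ifP => _ //; apply/ltW/ell.
  have [m'j|jm'] := leqP m' j.
    have SE : \sum_(j <= i < m) (if (m' <= i)%N then l i else 0) = t m - t j.
      rewrite -(sum_tele t jm); apply: eq_big_nat => i /andP[ji _].
      by rewrite (leq_trans m'j ji).
    rewrite SE; lra.
  have SE : \sum_(j <= i < m) (if (m' <= i)%N then l i else 0) = t m - t m'.
    rewrite (big_cat_nat (n := m')) //=; last exact: ltnW.
    rewrite big1_seq ?add0r; last first.
      by move=> i; rewrite mem_index_iota => /andP[_ /andP[_ im']]; rewrite leqNgt im'.
    rewrite -(sum_tele t m'm); apply: eq_big_nat => i /andP[mi _]; by rewrite mi.
  rewrite SE SV SU; have := Hj j jm; rewrite tm'; lra.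
have Hr i : (i.+1 < m)%N -> r i <= r i.+1.
  move=> im.
  have A0 := pos i ltac:(nlia); have B0 := pos i.+1 ltac:(nlia); have C0 := pos i.+2 ltac:(nlia).
  have l1 := ell i ltac:(nlia); have l2 := ell i.+1 ltac:(nlia).
  have g1 : g i <= l i / (x - t i.+1).
    have -> : l i = (x - t i) - (x - t i.+1) by rewrite /l; ring.
    exact: lnB_le A0 B0.
  have g2 : l i.+1 / (x - t i.+1) <= g i.+1.
    have := lnB_le C0 B0; rewrite /g /l.
    have -> : (x - t i.+2 - (x - t i.+1)) / (x - t i.+1) = - ((t i.+2 - t i.+1) / (x - t i.+1)).
      by rewrite -mulNr; congr (_ / _); ring.
    lra.
  apply: (@le_trans _ _ (1 / (x - t i.+1))).
    rewrite /r ler_pdivrMr // mul1r; move: g1; rewrite mulrC; apply: le_trans; exact: lexx.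
  rewrite /r ler_pdivlMr // mul1r; move: g2; rewrite mulrC; exact.
have := abel HD Hr (leq0n m); rewrite Ecr => h1; apply: le_trans h1 _.
case: (posnP m) => [m0|m0].
  by rewrite m0 big_geq // mulr0.
apply: mulr_ge0_le0; last exact: HD.
rewrite /r divr_ge0 //; last by apply/ltW/ell.
rewrite /g subr_ge0 ler_ln ?posrE ?pos //.
by have := H 0%N m0; lra.
Qed.

End C.


Section Z.
Variable R : realType.
Implicit Types (h : R -> R) (B T : seq R).

Definition ZP h B := forall a b, a < b -> (forall t, t \in B -> ~ (a < t < b)) ->
    (forall z, a <= z <= b -> h z = h a + (z - a)) \/
    (forall z, a <= z <= b -> h z = h a - (z - a)).

Lemma ZP_sub h B B' : {subset B <= B'} -> ZP h B -> ZP h B'.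
Proof. by move=> sB H a b ab Hf; apply: H => // t tB; apply: Hf; apply: sB. Qed.

Lemma PL_of_ZP h T (Q cL cR : R) :
  0 < Q -> sorted <%R T -> ZP h T ->
  (forall z, z <= - Q -> h z = cL - z) -> (forall z, Q <= z -> h z = z + cR) ->
  - Q - 1 \in T -> - Q \in T -> Q \in T -> Q + 1 \in T ->
  PL h (nth 0 T) (size T).-1.
Proof.
move=> Q0 sT HZ HL HR i1 i2 i3 i4.
set t := nth 0 T; set n := (size T).-1.
have sz : (0 < size T)%N by case: (T) i1.
have nS : (size T == n.+1)%N by rewrite /n prednK.
have le_t j k : (j < size T)%N -> (k < size T)%N -> (t j <= t k) = (j <= k)%N.
  by move=> jS kS; rewrite /t (lt_sorted_leq_nth 0 sT).
have lt_t j k : (j < size T)%N -> (k < size T)%N -> (t j < t k) = (j < k)%N.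
  by move=> jS kS; rewrite /t (lt_sorted_ltn_nth 0 sT).
have idx y : y \in T -> exists2 j, (j < size T)%N & y = t j.
  by move=> yT; exists (index y T); [rewrite index_mem | rewrite /t nth_index].
have [j1 j1S E1] := idx _ i1.
have [j2 j2S E2] := idx _ i2.
have [j3 j3S E3] := idx _ i3.
have [j4 j4S E4] := idx _ i4.
have t0 : t 0 <= - Q - 1 by rewrite E1 le_t //; nlia.
have tn : Q + 1 <= t n by rewrite E4 le_t //; nlia.
have j20 : (0 < j2)%N.
  case: j2 j2S E2 => // _ E; exfalso; lra.
have t1 : t 1 <= - Q by rewrite E2 le_t //; nlia.
have j3n : (j3 < n)%N.
  rewrite ltn_neqAle; apply/andP; split; last by nlia.
  apply/eqP => E; rewrite E in E3; exfalso; lra.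
have tn1 : Q <= t n.-1 by rewrite E3 le_t //; nlia.
have n0 : (0 < n)%N.
  case: (posnP n) => // n0; move: tn; rewrite n0 => ?; exfalso; lra.
have H : incr t n by move=> i iN; rewrite lt_t //; nlia.
split => //.
- move=> i iN; apply: HZ; first exact: H.
  move=> y yT /andP[y1 y2]; have [j jS Ej] := idx _ yT; rewrite Ej in y1 y2.
  rewrite lt_t // in y1; last nlia.
  rewrite lt_t // in y2; last nlia.
  nlia.
- move=> z z0; rewrite HL ?HL; [lra | lra | lra].
- move=> z z0; rewrite HR ?HR; [lra | lra | lra].
- split => //.
  + rewrite /up -leNgt HL ?HL; [|lra|lra].
    have := H 0%N n0; lra.
  + have n1 : n.-1.+1 = n by rewrite prednK.
    rewrite /up n1 HR ?HR; [|lra|lra].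
    have := H n.-1; rewrite n1 => /(_ (leqnn n)); lra.
Qed.

End Z.


Section Cl.
Variable R : realType.

Definition clamp (lo v hi : R) := Num.min (Num.max lo v) hi.

Lemma clamp_lo lo v hi : lo <= hi -> v <= lo -> clamp lo v hi = lo.
Proof. by move=> lh vl; rewrite /clamp max_l // min_l. Qed.
Lemma clamp_mid lo v hi : lo <= v -> v <= hi -> clamp lo v hi = v.
Proof. by move=> lv vh; rewrite /clamp max_r // min_l. Qed.
Lemma clamp_hi lo v hi : lo <= hi -> hi <= v -> clamp lo v hi = hi.
Proof.
move=> lh hv; have [vl|lv] := leP v lo.
  by rewrite /clamp max_l // min_r //; exact: le_trans hv vl.
by rewrite /clamp max_r ?ltW // min_r.
Qed.
Lemma clamp_ge lo v hi : lo <= hi -> lo <= clamp lo v hi.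
Proof.
move=> lh; have [vl|lv] := leP v lo; first by rewrite clamp_lo.
have [vh|hv] := leP v hi; first by rewrite clamp_mid // ltW.
by rewrite clamp_hi // ltW.
Qed.
Lemma clampD lo v hi z : lo <= hi -> clamp (lo + z) (v + z) (hi + z) = clamp lo v hi + z.
Proof.
move=> lh; have [vl|lv] := leP v lo.
  by rewrite !clamp_lo // lerD2r.
have [vh|hv] := leP v hi.
  by rewrite !clamp_mid // ?lerD2r // ltW.
by rewrite !clamp_hi // ?lerD2r // ltW.
Qed.

Lemma min_ge (s : seq R) (b : R) : (exists2 y, y \in s & b <= y) ->
  exists e, [/\ e \in s, b <= e & forall y, y \in s -> b <= y -> e <= y].
Proof.
elim: s => [[y]//|x s IH] [y ys by_].
have [bx|xb] := leP b x.
  case: (boolP (has (fun z => b <= z) s)) => [/hasP [z zs bz]|].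
    have [e [es be Hm]] := IH (ex_intro2 _ _ z zs bz).
    have [ex|xe] := leP e x.
      exists e; split => //; first by rewrite inE es orbT.
      by move=> w; rewrite inE => /orP[/eqP->//|]; apply: Hm.
    exists x; split => //; first by rewrite inE eqxx.
    move=> w; rewrite inE => /orP[/eqP->//|ws bw]; apply: le_trans (ltW xe) _; exact: Hm.
  move/hasPn => Hn; exists x; split => //; first by rewrite inE eqxx.
  move=> w; rewrite inE => /orP[/eqP->//|ws bw]; by move: (Hn w ws); rewrite bw.
move: ys; rewrite inE => /orP[/eqP E|ys]; first by move: by_; rewrite E => ?; exfalso; lra.
have [e [es be Hm]] := IH (ex_intro2 _ _ y ys by_).
exists e; split => //; first by rewrite inE es orbT.
move=> w; rewrite inE => /orP[/eqP E|]; last exact: Hm.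
by rewrite E => ?; exfalso; lra.
Qed.

Lemma ZP_clamp (W : R -> R) (eps b Q : R) (B1 : seq R) :
  0 < eps -> ZP W B1 -> (forall z, Q <= z -> W z = z - eps) -> Q \in B1 ->
  ZP (fun z => clamp (W z - eps) (z + b) (W z + eps))
     (B1 ++ [seq (W p + p - b - eps) / 2 | p <- B1] ++ [seq (W p + p - b + eps) / 2 | p <- B1]).
Proof.
move=> e0 HW HQ QB a b' ab Hf.
have Hf1 : forall p, p \in B1 -> ~ (a < p < b') by move=> p pB; apply: Hf; rewrite mem_cat pB.
have Hc1 : forall p, p \in B1 -> ~ (a < (W p + p - b - eps) / 2 < b').
  by move=> p pB; apply: Hf; rewrite !mem_cat; apply/orP; right; apply/orP; left; apply/mapP; exists p.
have Hc2 : forall p, p \in B1 -> ~ (a < (W p + p - b + eps) / 2 < b').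
  by move=> p pB; apply: Hf; rewrite !mem_cat; apply/orP; right; apply/orP; right; apply/mapP; exists p.
case: (HW a b' ab Hf1) => [Wp|Wm].
  left; set K := W a - a.
  have E z : a <= z <= b' -> clamp (W z - eps) (z + b) (W z + eps) = clamp (K - eps) b (K + eps) + z.
    move=> zi; rewrite Wp // -clampD; last lra.
    by congr clamp; rewrite /K; ring.
  move=> z zi; rewrite E // E; last by apply/andP; split; lra.
  ring.
set K := W a + a.
have [e [eB be emin]] : exists e, [/\ e \in B1, b' <= e & forall y, y \in B1 -> b' <= y -> e <= y].
  apply: min_ge; have [bQ|Qb] := leP b' Q; first by exists Q.
  exfalso; have Qa : Q <= a.
    rewrite leNgt; apply/negP => aQ; apply: (Hf1 Q QB); rewrite aQ; exact: Qb.
  have h1 := Wm b' ltac:(apply/andP; split; lra).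
  have h2 := HQ b' ltac:(lra). have h3 := HQ a Qa. lra.
have ae : a < e by lra.
have Hfe : forall p, p \in B1 -> ~ (a < p < e).
  move=> p pB /andP[ap pe]; have [pb|bp] := ltP p b'.
    by apply: (Hf1 p pB); rewrite ap pb.
  by have := emin p pB bp; lra.
have WeK : W e + e = K.
  case: (HW a e ae Hfe) => [Wp'|Wm'].
    exfalso; have h1 := Wm b' ltac:(apply/andP; split; lra).
    have h2 := Wp' b' ltac:(apply/andP; split; lra); lra.
  rewrite Wm' /K; last by apply/andP; split; lra.
  ring.
have c1n := Hc1 e eB; have c2n := Hc2 e eB.
rewrite WeK in c1n c2n.
set c1 := (K - b - eps) / 2 in c1n; set c2 := (K - b + eps) / 2 in c2n.
have c12 : c1 < c2 by rewrite /c1 /c2; lra.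
have Wz z : a <= z <= b' -> W z = K - z by move=> zi; rewrite Wm // /K; ring.
have F1 z : a <= z <= b' -> z <= c1 -> clamp (W z - eps) (z + b) (W z + eps) = K - z - eps.
  move=> zi zc; rewrite Wz //; apply: clamp_lo; [lra | rewrite /c1 in zc; lra].
have F2 z : a <= z <= b' -> c1 <= z -> z <= c2 -> clamp (W z - eps) (z + b) (W z + eps) = z + b.
  move=> zi z1 z2; rewrite Wz //; apply: clamp_mid; [rewrite /c1 in z1 | rewrite /c2 in z2]; lra.
have F3 z : a <= z <= b' -> c2 <= z -> clamp (W z - eps) (z + b) (W z + eps) = K - z + eps.
  move=> zi zc; rewrite Wz //; apply: clamp_hi; [lra | rewrite /c2 in zc; lra].
have aa : a <= a <= b' by apply/andP; split; lra.
have [bc1|c1b] := leP b' c1.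
  right => z zi /=; move/andP: (zi) => [z1 z2].
  have h := F1 a aa; rewrite (F1 z) //; [rewrite h; [ring|lra..]|lra..].
have c1a : c1 <= a by rewrite leNgt; apply/negP => ac; apply: c1n; rewrite ac.
have [bc2|c2b] := leP b' c2.
  left => z zi /=; move/andP: (zi) => [z1 z2].
  have h := F2 a aa; rewrite (F2 z) //; [rewrite h; [ring|lra..]|lra..].
have c2a : c2 <= a by rewrite leNgt; apply/negP => ac; apply: c2n; rewrite ac.
right => z zi /=; move/andP: (zi) => [z1 z2].
have h := F3 a aa; rewrite (F3 z) //; [rewrite h; [ring|lra..]|lra..].
Qed.

End Cl.


Section H.
Variable R : realType.

Lemma shift_min (h : R -> R) e y : is_local_min (fun z => h (z - e)) y <-> is_local_min h (y - e).
Proof.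
split => [[d [d0 H]]|[d [d0 H]]]; exists d; split => // z zd.
- have := H (z + e); rewrite addrK; apply.
  by have -> : z + e - y = z - (y - e) by ring.
- apply: H; by have -> : z - e - (y - e) = z - y by ring.
Qed.

Lemma shift_max (h : R -> R) e y : is_local_max (fun z => h (z - e)) y <-> is_local_max h (y - e).
Proof.
split => [[d [d0 H]]|[d [d0 H]]]; exists d; split => // z zd.
- have := H (z + e); rewrite addrK; apply.
  by have -> : z + e - y = z - (y - e) by ring.
- apply: H; by have -> : z - e - (y - e) = z - y by ring.
Qed.

Lemma mem_shift (s : seq R) e y : (y \in map (fun x => x + e) s) = (y - e \in s).
Proof. by rewrite -{1}(subrK e y) (mem_map (@addIr _ e)). Qed.

Lemma wgt_shift xs ys (e x : R) :
  wgt (map (fun x => x + e) xs) (map (fun x => x + e) ys) (x + e) = wgt xs ys x.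
Proof.
rewrite /wgt !big_map; congr (_ / _).
  by apply: eq_bigr => y _; ring.
apply: eq_big => [j|j _]; last ring.
by rewrite (inj_eq (@addIr _ e)).
Qed.

Lemma sum_sub (s1 s2 : seq R) (G : R -> R) : uniq s1 -> uniq s2 -> {subset s1 <= s2} ->
  (forall y, y \in s2 -> 0 <= G y) -> \sum_(y <- s1) G y <= \sum_(y <- s2) G y.
Proof.
move=> U1 U2 sub G0.
have P : perm_eq s1 [seq y <- s2 | y \in s1].
  apply: uniq_perm => //; first exact: filter_uniq.
  by move=> y; rewrite mem_filter; apply/idP/andP => [ys|[]//]; split => //; apply: sub.
rewrite (perm_big _ P) big_filter big_mkcond [X in _ <= X]big_seq [X in X <= _]big_seq.
apply: ler_sum => y ys; case: ifP => _ //; exact: G0.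
Qed.

End H.


Theorem proposition5p1 (R : realType) (Om : R -> R) (xs ys : seq R)
  (eps b zp : R) (xs' ys' : seq R) (phi : R -> R) :
  zigzag Om -> zigzag_extrema Om xs ys ->
  0 < eps -> 0 < b ->
  (zp + b = Om (zp - eps) + eps) ->
  (forall z, z + b = Om (z - eps) + eps -> z <= zp) ->
  zigzag_extrema (eps_shift Om eps (fun x => x + b)) xs' ys' ->
  (forall z, 0 <= phi z) ->
  transition_integral xs ys (fun z => phi (z + eps) * Pmin eps zp (z + eps))
    <= transition_integral xs' ys' phi.
Proof.
move=> HZ Hext e0 b0 Hzp _ Hext' Hphi.
case: HZ => [[Hnn [Hlip [M HM]]] [S HS]].
case: Hext => [sxs [sys [Hxs Hys]]].
case: Hext' => [sxs' [sys' [Hxs' Hys']]].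
pose W := fun z => Om (z - eps).
pose Ob := eps_shift Om eps (fun x => x + b).
have ObE z : Ob z = clamp (W z - eps) (z + b) (W z + eps) by [].
pose Q := `|M| + eps + b + 1.
have nM := ler_norm M.
have nM0 := normr_ge0 M.
have Q0 : 0 < Q by rewrite /Q; have := normr_ge0 M; lra.
have FW1 z : z <= - Q -> W z = eps - z.
  move=> zq; have nz : `|z - eps| = eps - z by rewrite ler0_norm; [ring | rewrite /Q in zq; lra].
  have := HM (z - eps); rewrite nz /W => -> //; rewrite /Q in zq; lra.
have FW2 z : Q <= z -> W z = z - eps.
  move=> zq; have nz : `|z - eps| = z - eps by rewrite ger0_norm //; rewrite /Q in zq; lra.
  have := HM (z - eps); rewrite nz /W => -> //; rewrite /Q in zq; lra.
have FB1 z : z <= - Q -> Ob z = 0 - z.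
  move=> zq; rewrite ObE FW1 //; have -> : eps - z - eps = 0 - z by ring.
  apply: clamp_lo; rewrite /Q in zq; lra.
have FB2 z : Q <= z -> Ob z = z + 0.
  move=> zq; rewrite ObE FW2 //; have -> : z - eps + eps = z + 0 by ring.
  apply: clamp_hi; rewrite /Q in zq; lra.
have ObW z : zp <= z -> Ob z = W z + eps.
  move=> zz; rewrite ObE; apply: clamp_hi; first lra.
  have := Hlip (z - eps) (zp - eps).
  have -> : z - eps - (zp - eps) = z - zp by ring.
  rewrite (ger0_norm (x := z - zp)); last lra.
  rewrite ler_norml => /andP[_ h]; rewrite /W; lra.
have ObWl z : W z - eps <= Ob z by rewrite ObE; apply: clamp_ge; lra.
pose SW := map (fun s => s + eps) S.
have ZPW : ZP W SW.
  move=> a c ac Hf.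
  have Hf' : forall t, t \in S -> ~ (a - eps < t < c - eps).
    move=> t tS /andP[t1 t2]; apply: (Hf (t + eps)); first by apply/mapP; exists t.
    apply/andP; split; lra.
  case: (HS (a - eps) (c - eps) ltac:(lra) Hf') => [Hp|Hm]; [left|right] => z zi.
  - rewrite /W Hp; last by move/andP: zi => [? ?]; apply/andP; split; lra.
    ring.
  - rewrite /W Hm; last by move/andP: zi => [? ?]; apply/andP; split; lra.
    ring.
pose B1 := SW ++ [:: - Q - 1; - Q; Q; Q + 1; zp; zp - eps].
have ZPW1 : ZP W B1 by apply: ZP_sub ZPW => y yS; rewrite mem_cat yS.
have QB1 : Q \in B1 by rewrite mem_cat !inE eqxx !orbT.
have ZPB := ZP_clamp (b := b) e0 ZPW1 FW2 QB1.
pose B2 := B1 ++ [seq (W p + p - b - eps) / 2 | p <- B1] ++ [seq (W p + p - b + eps) / 2 | p <- B1].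
pose T := sort <=%R (undup B2).
have sT : sorted <%R T by rewrite sort_lt_sorted undup_uniq.
have memT y : (y \in T) = (y \in B2) by rewrite mem_sort mem_undup.
have B1T : {subset B1 <= T} by move=> y yB; rewrite memT mem_cat yB.
have ZPWT : ZP W T by apply: ZP_sub ZPW1.
have ZPBT : ZP Ob T by apply: ZP_sub ZPB => y; rewrite memT.
have m1 : - Q - 1 \in T by apply: B1T; rewrite mem_cat !inE eqxx !orbT.
have m2 : - Q \in T by apply: B1T; rewrite mem_cat !inE eqxx !orbT.
have m3 : Q \in T by apply: B1T.
have m4 : Q + 1 \in T by apply: B1T; rewrite mem_cat !inE eqxx !orbT.
have m5 : zp \in T by apply: B1T; rewrite mem_cat !inE eqxx !orbT.
have m6 : zp - eps \in T by apply: B1T; rewrite mem_cat !inE eqxx !orbT.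
have PLW : PL W (nth 0 T) (size T).-1.
  apply: (PL_of_ZP (cL := eps) (cR := - eps) Q0 sT ZPWT) => //.
have PLB : PL Ob (nth 0 T) (size T).-1.
  by apply: (PL_of_ZP (cL := 0) (cR := 0) Q0 sT ZPBT).
set t := nth 0 T; set n := (size T).-1.
have [H _ _ _ [n0 _ _]] := PLW.
have sz : (0 < size T)%N by case: (T) m1.
have idx y : y \in T -> exists2 j, (j <= n)%N & y = t j.
  move=> yT; exists (index y T); last by rewrite /t nth_index.
  by rewrite /n -ltnS prednK // index_mem.
have [m mn Em] := idx _ m5.
have [m' m'n Em'] := idx _ m6.
have tle i j : (i <= j)%N -> (j <= n)%N -> t i <= t j by move=> ? ?; exact: incr_le H _ _.
have m'm : (m' <= m)%N.
  rewrite leqNgt; apply/negP => mm'; have := tle m m' (ltnW mm') m'n; lra.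
have Uxs := lt_sorted_uniq sxs; have Uys := lt_sorted_uniq sys.
have Uxs' := lt_sorted_uniq sxs'; have Uys' := lt_sorted_uniq sys'.
pose xsW := map (fun x => x + eps) xs; pose ysW := map (fun x => x + eps) ys.
have UxW : uniq xsW by rewrite map_inj_uniq //; exact: addIr.
have UyW : uniq ysW by rewrite map_inj_uniq //; exact: addIr.
have HxW y : y \in xsW <-> is_local_min W y.
  rewrite mem_shift; split => [/Hxs h|h]; first exact: (shift_min Om eps y).2.
  by apply/Hxs; exact: (shift_min Om eps y).1.
have HyW y : y \in ysW <-> is_local_max W y.
  rewrite mem_shift; split => [/Hys h|h]; first exact: (shift_max Om eps y).2.
  by apply/Hys; exact: (shift_max Om eps y).1.
have HxB y : y \in xs' <-> is_local_min Ob y by split => /Hxs'.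
have HyB y : y \in ys' <-> is_local_max Ob y by split => /Hys'.
rewrite (ti_wgt _ _ Uxs) (ti_wgt _ _ Uxs').
have LHSe : \sum_(x <- xs) wgt xs ys x * (phi (x + eps) * Pmin eps zp (x + eps)) =
            \sum_(y <- xsW) wgt xsW ysW y * (phi y * Pmin eps zp y).
  by rewrite big_map; apply: eq_bigr => x _; rewrite wgt_shift.
rewrite LHSe.
pose F y := wgt xsW ysW y * (phi y * Pmin eps zp y).
pose G y := wgt xs' ys' y * phi y.
have G0 y : y \in xs' -> 0 <= G y.
  by move=> yx; rewrite /G mulr_ge0 // (PL_weight_ge0 PLB).
have key y : y \in xsW -> zp < y -> y \in xs' /\ F y <= G y.
  move=> yx zy.
  have [k [kn yk ukW1 ukW]] := ((PL_ext y PLW).1).1 ((HxW y).1 yx).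
  rewrite -/t -/n in kn yk ukW1 ukW.
  have mk : (m < k)%N.
    rewrite ltnNge; apply/negP => km; have := tle k m km mn; lra.
  have kN : (k < n)%N by case/andP: kn.
  have upE i : (m <= i)%N -> (i < n)%N -> up Ob t i = up W t i.
    move=> mi iN; rewrite /up (ObW (t i)) ?(ObW (t i.+1)) ?ltrD2r //.
      by rewrite Em; apply: tle; nlia.
    by rewrite Em; apply: tle; nlia.
  have ukB1 : ~~ up Ob t k.-1 by rewrite upE //; nlia.
  have ukB : up Ob t k by rewrite upE //; nlia.
  have yB : y \in xs'.
    by apply/HxB; apply/(PL_ext y PLB).1; exists k; split.
  split => //.
  rewrite /F /G yk (PL_weight PLW UxW UyW HxW HyW kn ukW1 ukW).
  rewrite (PL_weight PLB Uxs' Uys' HxB HyB kn ukB1 ukB).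
  have PE : Pmin eps zp (t k) = (t k - t m) / (t k - t m + eps).
    rewrite /Pmin ifT; last by rewrite -yk; lra.
    by rewrite Em; congr (_ / _); ring.
  rewrite PE.
  have mk' : (m <= k)%N by exact: ltnW.
  rewrite !(big_cat_nat (n := m) (m := 0) (p := k)) //=.
  rewrite -/t -/n.
  have eq2 : \prod_(m <= i < k) (if up Ob t i then (t k - t i.+1) / (t k - t i) else 1) =
             \prod_(m <= i < k) (if up W t i then (t k - t i.+1) / (t k - t i) else 1).
    by apply: eq_big_nat => i /andP[mi ik]; rewrite upE //; nlia.
  have eqR : \prod_(k <= i < n) (if up Ob t i then 1 else (t k - t i) / (t k - t i.+1)) =
             \prod_(k <= i < n) (if up W t i then 1 else (t k - t i) / (t k - t i.+1)).
    by apply: eq_big_nat => i /andP[ki iN]; rewrite upE //; nlia.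
  rewrite eq2 eqR.
  have L2 : 0 <= \prod_(m <= i < k) (if up W t i then (t k - t i.+1) / (t k - t i) else 1).
    rewrite big_seq; apply: prodr_ge0 => i; rewrite mem_index_iota => /andP[_ ik].
    case: ifP => _ //; apply: divr_ge0; rewrite subr_ge0; apply: tle => //; nlia.
  have R2 : 0 <= \prod_(k <= i < n) (if up W t i then 1 else (t k - t i) / (t k - t i.+1)).
    rewrite big_seq; apply: prodr_ge0 => i; rewrite mem_index_iota => /andP[ki iN].
    case: ifP => _ //; apply: div_npos; rewrite subr_le0; apply: tle => //; nlia.
  have Hm : incr t m by move=> i im; apply: H; nlia.
  have Htk : t m < t k by rewrite -Em -yk.
  have Htm' : t m' = t m - eps by rewrite -Em -Em'.
  have HpW : forall i, (i < m)%N -> W (t i.+1) = W (t i) + sl (up W t i) (t i.+1 - t i).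
    move=> i im; apply: (piece PLW); first nlia.
    apply/andP; split; last exact: lexx.
    by apply/ltW/H; nlia.
  have HpB : forall i, (i < m)%N -> Ob (t i.+1) = Ob (t i) + sl (up Ob t i) (t i.+1 - t i).
    move=> i im; apply: (piece PLB); first nlia.
    apply/andP; split; last exact: lexx.
    by apply/ltW/H; nlia.
  have Hbm : Ob (t m) = W (t m) + eps by rewrite ObW // Em.
  have Hj : forall j, (j <= m)%N -> W (t j) - eps <= Ob (t j) by move=> j _; exact: ObWl.
  have lc := left_compare Hm Htk m'm Htm' e0 HpW HpB Hbm Hj.
  move: lc L2 R2.
  set LW1 := \prod_(0 <= i < m) (if up W t i then _ else 1).
  set LB1 := \prod_(0 <= i < m) (if up Ob t i then _ else 1).
  set LW2 := \prod_(m <= i < k) _.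
  set RW := \prod_(k <= i < n) _.
  have p0 := Hphi (t k).
  set PP := (t k - t m) / (t k - t m + eps).
  move=> lc L2 R2.
  have nn : 0 <= LW2 * RW * phi (t k) by rewrite !mulr_ge0.
  have := ler_wpM2r nn lc.
  have -> : LW1 * LW2 * RW * (phi (t k) * PP) = LW1 * PP * (LW2 * RW * phi (t k)) by ring.
  by have -> : LB1 * LW2 * RW * phi (t k) = LB1 * (LW2 * RW * phi (t k)) by ring.
have F0 y : ~~ (zp < y) -> F y = 0.
  move=> zy; rewrite /F /Pmin; case: ifP => h; last by rewrite !mulr0.
  have -> : y = zp by apply/eqP; rewrite eq_le h andbT; rewrite -leNgt in zy.
  by rewrite subrr mul0r !mulr0.
rewrite (bigID (fun y => ~~ (zp < y))) /= big1 ?add0r; last by move=> y zy; exact: F0.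
rewrite (eq_bigl (fun y => zp < y)); last by move=> y; rewrite negbK.
apply: (@le_trans _ _ (\sum_(y <- xsW | zp < y) G y)).
  rewrite big_seq_cond [X in _ <= X]big_seq_cond; apply: ler_sum => y /andP[yx zy].
  exact: (key y yx zy).2.
rewrite -[X in X <= _]big_filter; apply: (@sum_sub _ _ _ G) => //; first exact: filter_uniq.
by move=> y; rewrite mem_filter => /andP[zy yx]; exact: (key y yx zy).1.
Qed.
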